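(* Let $n\ge 4$ and let $\mathcal M$ be an IP-SEG* model which is an IP-SEG representation of the chordless cycle $C_n$ and which contains at least one interval segment. Then $\mathcal M$ has exactly one interval arc (and hence exactly one permutation arc).
   Context: Let $L_1$ and $L_2$ be two distinct parallel horizontal lines in the plane. A closed straight line segment is an interval segment if both of its endpoints lie on the same line $L_i$, and a permutation segment if one endpoint lies on $L_1$ and the other on $L_2$. An IP-SEG model is a finite family of interval and permutation segments; its intersection graph has one vertex per segment, adjacent iff the segments intersect. An IP-SEG* model is an IP-SEG model in which all interval segments lie on the same line $L_i$. For $m\ge 3$, $C_m$ is the chordless cycle on $v_1,\dots,v_m$ with $v_i$ adjacent to $v_{i+1}$ (indices mod $m$) and no other edges. An IP-SEG representation of $C_m$ is an IP-SEG model with segments $s(v_1),\dots,s(v_m)$ whose intersection graph is $C_m$ with $s(v_i)$ corresponding to $v_i$. If such a representation contains both interval and permutation segments, an interval arc is a maximal sequence of cyclically consecutive segments $s(v_i),\dots,s(v_j)$ that are all interval segments; a permutation arc is a maximal sequence of cyclically consecutive segments that are all permutation segments. *)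

(* Defs.v *)
(* the plane is R^2 for an arbitrary real field R
   (this includes the real numbers; all notions are first-order). *)
From HB Require Import structures.
From mathcomp Require Import all_boot all_order all_algebra.
Set Implicit Arguments. Unset Strict Implicit. Unset Printing Implicit Defensive.
Import Order.TTheory GRing.Theory Num.Theory.
Local Open Scope ring_scope.

Section Geometry.
Variable R : realFieldType.

Definition point := (R * R)%type.
Definition segment := (point * point)%type.

Definition on_seg (x : point) (s : segment) : Prop :=
  exists t : R, 0 <= t /\ t <= 1 /\
    x.1 = (1 - t) * s.1.1 + t * s.2.1 /\
    x.2 = (1 - t) * s.1.2 + t * s.2.2.

Definition seg_meet (s1 s2 : segment) : Prop :=
  exists x : point, on_seg x s1 /\ on_seg x s2.

(* The horizontal lines are L1 = {y = a} and L2 = {y = b}. *)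
Definition on_line (c : R) (p : point) : bool := p.2 == c.

Definition interval_seg (a b : R) (s : segment) : bool :=
  (on_line a s.1 && on_line a s.2) || (on_line b s.1 && on_line b s.2).

Definition perm_seg (a b : R) (s : segment) : bool :=
  (on_line a s.1 && on_line b s.2) || (on_line b s.1 && on_line a s.2).

Definition IPSEG_model (a b : R) (n : nat) (s : nat -> segment) : Prop :=
  a != b /\ forall i, (i < n)%N -> interval_seg a b (s i) || perm_seg a b (s i).

Definition IPSEGstar_model (a b : R) (n : nat) (s : nat -> segment) : Prop :=
  IPSEG_model a b n s /\
  exists c, (c == a) || (c == b) /\
    forall i, (i < n)%N -> interval_seg a b (s i) ->
      on_line c (s i).1 && on_line c (s i).2.

(* adjacency in the chordless cycle C_n on vertices 0..n-1
   (vertex v_{i+1} of the paper is index i) *)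
Definition cycle_adj (n i j : nat) : bool :=
  (i.+1 %% n == j)%N || (j.+1 %% n == i)%N.

Definition represents_cycle (n : nat) (s : nat -> segment) : Prop :=
  forall i j, (i < n)%N -> (j < n)%N -> i != j ->
    (seg_meet (s i) (s j) <-> cycle_adj n i j).

Definition arc (P : pred segment) (n : nat) (s : nat -> segment) (i k : nat) : Prop :=
  (i < n)%N /\ (0 < k)%N /\ (k < n)%N /\
  (forall m, (m < k)%N -> P (s ((i + m) %% n)%N)) /\
  ~~ P (s ((i + n - 1) %% n)%N) /\ ~~ P (s ((i + k) %% n)%N).

Definition interval_arc (a b : R) := arc (interval_seg a b).
Definition perm_arc (a b : R) := arc (perm_seg a b).

End Geometry.

(* Main.v *)
Require Import Defs.
From HB Require Import structures.
From mathcomp Require Import all_boot all_order all_algebra.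
From mathcomp Require Import zify ring lra.
Import Order.TTheory GRing.Theory Num.Theory.
Set Implicit Arguments. Unset Strict Implicit. Unset Printing Implicit Defensive.

Definition arcP (P : nat -> bool) (n i k : nat) : Prop :=
  i < n /\ 0 < k /\ k < n /\ (forall m, m < k -> P (i + m)) /\
  ~~ P (i + n - 1) /\ ~~ P (i + k).

Lemma first_true (P : nat -> bool) x d :
  ~~ P x -> P (x + d) -> exists e, 0 < e <= d /\ P (x + e) /\ ~~ P (x + e.-1).
Proof.
move=> hx; elim: d => [|d IH] h.
  by rewrite addn0 in h; rewrite h in hx.
case hd: (P (x + d)).
  by have [e [he1 he2]] := IH hd; exists e; split => //; lia.
by exists d.+1; split; [lia | split => //=; rewrite hd].
Qed.

Lemma arc_len (P : nat -> bool) n i k1 k2 : arcP P n i k1 -> arcP P n i k2 -> k1 = k2.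
Proof.
move=> [_ [_ [_ [a1 [_ b1]]]]] [_ [_ [_ [a2 [_ b2]]]]].
have [h|h|h] := ltngtP k1 k2 => //.
  by have := a2 k1 h; rewrite (negbTE b1).
by have := a1 k2 h; rewrite (negbTE b2).
Qed.

Lemma mod_self_add n i y : i < n -> 0 < y < n -> (i + y) %% n != i.
Proof.
move=> hi hy; apply/negP => /eqP e.
have : (i + y == i + 0 %[mod n]) by rewrite addn0 e modn_small.
rewrite eqn_modDl mod0n modn_small; last by lia.
lia.
Qed.

Lemma comb (P : nat -> bool) n :
  0 < n -> (forall j, P (j %% n) = P j) -> (exists j, P j) -> (exists j, ~~ P j) ->
  (forall i i', i < n -> i' < n -> P i -> ~~ P (i + n - 1) -> P i' -> ~~ P (i' + n - 1) -> i = i') ->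
  (exists i k, arcP P n i k /\ forall i' k', arcP P n i' k' -> i' = i /\ k' = k) /\
  (exists i k, arcP (fun j => ~~ P j) n i k /\
     forall i' k', arcP (fun j => ~~ P j) n i' k' -> i' = i /\ k' = k).
Proof.
move=> n0 Pn [j1 Pj1] [j0 Pj0] H3.
have Pma : forall x y, P (x %% n + y) = P (x + y).
  by move=> x y; rewrite -Pn modnDml Pn.
have Pan : forall j, P (j + n) = P j by move=> j; rewrite -Pn modnDr Pn.
have mkstart : forall y, 0 < y -> P y -> ~~ P y.-1 ->
    y %% n < n /\ P (y %% n) /\ ~~ P (y %% n + n - 1).
  move=> y y0 hy hy'; split; first by rewrite ltn_mod.
  rewrite Pn hy; split => //.
  have -> : y %% n + n - 1 = y %% n + (y.-1 + n - y) by lia.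
  rewrite Pma; have -> : y + (y.-1 + n - y) = y.-1 + n by lia.
  by rewrite Pan.
have [i [hi [Pi Pi']]] : exists i, i < n /\ P i /\ ~~ P (i + n - 1).
  have Pj0' : ~~ P (j0 %% n) by rewrite Pn.
  have Pj1' : P (j0 %% n + (j1 %% n + n - j0 %% n)).
    rewrite Pma; have -> : j0 + (j1 %% n + n - j0 %% n) = j1 %% n + n + (j0 - j0 %% n).
      have := leq_mod j0 n; have := ltn_pmod j0 n0; lia.
    have -> : j0 - j0 %% n = j0 %/ n * n by rewrite {1}(divn_eq j0 n) addnK.
    by rewrite -Pn addnC modnMDl Pn Pan Pn.
  have [e [he [Pe Pe']]] := first_true Pj0' Pj1'.
  have := mkstart (j0 %% n + e) ltac:(lia) Pe.
  have -> : (j0 %% n + e).-1 = j0 %% n + e.-1 by lia.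
  move=> /(_ Pe') [a [b c]]; by exists ((j0 %% n + e) %% n).
have init : forall m m', m < n -> m' <= m -> P (i + m) -> P (i + m').
  move=> m m' hm hm' Pm; apply/negPn/negP => Pm'.
  have Pm2 : P (i + m' + (m - m')) by have -> : i + m' + (m - m') = i + m by lia.
  have [e [he [Pe Pe']]] := first_true Pm' Pm2.
  have := mkstart (i + m' + e) ltac:(lia) Pe.
  have -> : (i + m' + e).-1 = i + m' + e.-1 by lia.
  move=> /(_ Pe') [a [b c]].
  have := H3 _ _ hi a Pi Pi' b c.
  have := mod_self_add (y := m' + e) hi ltac:(lia).
  by rewrite addnA => /eqP ne e2; apply: ne.
have Pin : ~~ P (i + (n - 1)) by have -> : i + (n - 1) = i + n - 1 by lia.
have Pi0 : ~~ ~~ P i by rewrite Pi.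
have [k [hk [Pk Pk']]] := @first_true (fun j => ~~ P j) i (n - 1) Pi0 Pin.
rewrite negbK in Pk'.
have allk : forall m, m < k -> P (i + m).
  by move=> m hm; apply: (init k.-1) => //; lia.
have arcI : arcP P n i k.
  by do 5 (split; first by (done || lia)).
split.
  exists i, k; split => // i' k' hA.
  have [hi' [hk' [hk'' [a1 [a2 a3]]]]] := hA.
  have Pi'' : P i' by have := a1 0 hk'; rewrite addn0.
  have ei : i' = i by apply: H3.
  by subst i'; split => //; exact: arc_len hA arcI.
set j := (i + k) %% n.
have hj : j < n by rewrite ltn_mod.
have arcJ : arcP (fun j => ~~ P j) n j (n - k).
  have c1 : forall m, m < n - k -> ~~ P (j + m).
    move=> m hm; rewrite /j Pma; apply/negP => Pm.
    have := init (k + m) k ltac:(lia) ltac:(lia).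
    by rewrite addnA => /(_ Pm); rewrite (negbTE Pk).
  have c2 : P (j + n - 1).
    rewrite /j; have -> : (i + k) %% n + n - 1 = (i + k) %% n + (n - 1) by lia.
    rewrite Pma; have -> : i + k + (n - 1) = i + k.-1 + n by lia.
    by rewrite Pan; apply: allk; lia.
  have c3 : P (j + (n - k)).
    rewrite /j Pma; have -> : i + k + (n - k) = i + n by lia.
    by rewrite Pan.
  rewrite /arcP !negbK.
  by do 5 (split; first by (done || lia)).
exists j, (n - k); split => // j' k' hA.
have [hj' [hk1 [hk2 [a1 [a2 a3]]]]] := hA.
have Pj' : ~~ P j' by have := a1 0 hk1; rewrite addn0.
rewrite negbK in a2.
have [m [ej hm]] : exists m, (i + m) %% n = j' /\ m < n.
  exists ((j' + n - i) %% n); split; last by rewrite ltn_mod.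
  rewrite modnDmr; have -> : i + (j' + n - i) = j' + n.
    by move: hi; clear; lia.
  by rewrite modnDr modn_small.
have jdef : j = (i + k) %% n by [].
clearbody j.
have Pm : ~~ P (i + m) by rewrite -Pn ej.
have Pm1 : P (i + m + (n - 1)).
  have e1 : j' + (n - 1) = j' + n - 1 by move: n0; clear; lia.
  by rewrite -Pma ej e1.
have mk : m = k.
  have m0 : 0 < m.
    by case: (posnP m) Pm => // ->; rewrite addn0 Pi.
  have Pm1' : P (i + m.-1).
    have e2 : i + m + (n - 1) = i + m.-1 + n by move: m0 n0; clear; lia.
    move: Pm1; rewrite e2.
    by rewrite Pan.
  have [h|h|h] := ltngtP m k => //.
    by rewrite allk in Pm.
  have := init m.-1 k ltac:(move: hm; clear; lia) ltac:(move: h; clear; lia) Pm1'.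
  by rewrite (negbTE Pk).
have ej' : j' = j by rewrite -ej mk jdef.
split => //; rewrite ej' in hA; exact: arc_len hA arcJ.
Qed.

Lemma first_min (P : nat -> bool) x d :
  ~~ P x -> P (x + d) -> exists e, 0 < e <= d /\ P (x + e) /\ forall e', e' < e -> ~~ P (x + e').
Proof.
move=> hx hd.
have d0 : 0 < d by case: d hd => [|d] //; rewrite addn0 => h; rewrite h in hx.
have ex : exists e, (0 < e) && P (x + e) by exists d; rewrite d0 hd.
case: (ex_minnP ex) => e /andP [e0 Pe] hmin.
exists e; split; first by rewrite e0 /=; apply: hmin; rewrite d0.
split => // e' he'; case: e' he' => [|e'] he'; first by rewrite addn0.
apply/negP => h; have := hmin e'.+1; rewrite h /= => /(_ isT); lia.
Qed.

Lemma modS_mod n x : (x %% n).+1 %% n = x.+1 %% n.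
Proof. by rewrite -addn1 modnDml addn1. Qed.

Lemma rot_eq n r u v : u < n -> v < n -> ((r + u) %% n == (r + v) %% n) = (u == v).
Proof. by move=> hu hv; rewrite eqn_modDl !modn_small. Qed.

Lemma cyc n u v : u < n -> v < n -> (u.+1 %% n == v %% n) -> u.+1 = v \/ (v = 0 /\ u = n.-1).
Proof.
move=> hu hv; rewrite (modn_small hv).
have [h|h] := ltnP u.+1 n.
  by rewrite modn_small // => /eqP; left.
have e : u.+1 = n by lia.
by rewrite e modnn => /eqP e0; right; split => //; lia.
Qed.

Lemma adj_rot n r u v : u < n -> v < n -> cycle_adj n ((r + u) %% n) ((r + v) %% n) ->
  u.+1 = v \/ v.+1 = u \/ (u = 0 /\ v = n.-1) \/ (v = 0 /\ u = n.-1).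
Proof.
move=> hu hv; rewrite /cycle_adj !modS_mod -!addnS !eqn_modDl.
case/orP => H; [have := cyc hu hv H | have := cyc hv hu H]; lia.
Qed.

Lemma adj_rot_cons n r u : u.+1 < n -> cycle_adj n ((r + u) %% n) ((r + u.+1) %% n).
Proof. by move=> h; rewrite /cycle_adj modS_mod -addnS eqxx. Qed.

Lemma adj_rot_wrap n r : 0 < n -> cycle_adj n ((r + n.-1) %% n) ((r + 0) %% n).
Proof.
move=> h; rewrite /cycle_adj modS_mod -addnS prednK // addn0.
by rewrite modnDr eqxx.
Qed.

Local Open Scope ring_scope.

Definition btw {R : realFieldType} (x y z : R) : Prop :=
  (x <= z /\ z <= y) \/ (y <= z /\ z <= x).

Lemma btw_conv (R : realFieldType) (x y z : R) :
  btw x y z -> exists l, 0 <= l /\ l <= 1 /\ z = (1 - l) * x + l * y.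
Proof.
have gen : forall x y z : R, x < y -> x <= z -> z <= y ->
    exists l, 0 <= l /\ l <= 1 /\ z = (1 - l) * x + l * y.
  move=> x' y' z' lt xz zy.
  have hne : y' - x' != 0 by rewrite subr_eq0 gt_eqF.
  have hp : 0 < y' - x' by rewrite subr_gt0.
  exists ((z' - x') / (y' - x')); split; first by apply: divr_ge0; [rewrite subr_ge0 | exact: ltW].
  split; first by rewrite ler_pdivrMr // mul1r lerD2r.
  by field.
move=> [[h1 h2]|[h1 h2]].
  have [e|lt] := eqVneq x y.
    by exists 0; split => //; split; [lra| rewrite e in h1 h2 *; lra].
  have hlt : x < y by rewrite lt_neqAle lt /=; exact: le_trans h1 h2.
  by apply: gen.
have [e|lt] := eqVneq x y.
  by exists 0; split => //; split; [lra| rewrite e in h1 h2 *; lra].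
have hlt : y < x by rewrite lt_neqAle eq_sym lt /=; exact: le_trans h1 h2.
have [l [l0 [l1 hz]]] := gen y x z hlt h1 h2.
exists (1 - l); split; first lra. split; first lra. rewrite hz; ring.
Qed.

Lemma on_seg_int (R : realFieldType) (c x : R) (s : segment R) :
  s.1.2 = c -> s.2.2 = c -> on_seg (x, c) s <-> btw s.1.1 s.2.1 x.
Proof.
move=> e1 e2; split.
  move=> [t [t0 [t1 [hx _]]]]; simpl in hx.
  have d1 : x - s.1.1 = t * (s.2.1 - s.1.1) by rewrite hx; ring.
  have d2 : s.2.1 - x = (1 - t) * (s.2.1 - s.1.1) by rewrite hx; ring.
  have [h|h] := lerP s.1.1 s.2.1.
    have a1 : 0 <= t * (s.2.1 - s.1.1) by rewrite mulr_ge0 // subr_ge0.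
    have a2 : 0 <= (1 - t) * (s.2.1 - s.1.1) by rewrite mulr_ge0 // subr_ge0.
    left; lra.
  have a1 : 0 <= t * (s.1.1 - s.2.1) by apply: mulr_ge0; rewrite ?subr_ge0 // ltW.
  have a2 : 0 <= (1 - t) * (s.1.1 - s.2.1) by apply: mulr_ge0; rewrite subr_ge0 // ltW.
  right. split. nra. nra.
move=> /btw_conv [l [l0 [l1 hz]]]; exists l; split => //; split => //; split => //=.
by rewrite e1 e2; ring.
Qed.

Definition sfoot {R : realFieldType} (c : R) (s : segment R) :=
  if s.1.2 == c then s.1.1 else s.2.1.
Definition shead {R : realFieldType} (c : R) (s : segment R) :=
  if s.1.2 == c then s.2.1 else s.1.1.

Definition permc {R : realFieldType} (c d : R) (s : segment R) : Prop :=
  (s.1.2 = c /\ s.2.2 = d) \/ (s.1.2 = d /\ s.2.2 = c).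

Lemma perm_param (R : realFieldType) (c d : R) (s : segment R) {z : point R} :
  c != d -> permc c d s ->
  on_seg z s <-> exists t, 0 <= t /\ t <= 1 /\
     z.1 = (1 - t) * sfoot c s + t * shead c s /\ z.2 = (1 - t) * c + t * d.
Proof.
move=> cd [[e1 e2]|[e1 e2]]; rewrite /sfoot /shead e1.
  by rewrite eqxx -e1 -e2.
rewrite eq_sym (negbTE cd); split.
  move=> [t [t0 [t1 [h1 h2]]]]; exists (1 - t); split; first lra; split; first lra.
  by split; [rewrite h1 | rewrite h2 e1 e2]; ring.
move=> [t [t0 [t1 [h1 h2]]]]; exists (1 - t); split; first lra; split; first lra.
by split; [rewrite h1 | rewrite h2 e1 e2]; ring.
Qed.

Lemma perm_on_c (R : realFieldType) (c d : R) (s : segment R) {x : R} :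
  c != d -> permc c d s -> on_seg (x, c) s <-> x = sfoot c s.
Proof.
move=> cd ps; rewrite (perm_param cd ps); split.
  move=> [t [t0 [t1 [/= h1 h2]]]].
  have ht : t * (d - c) = 0.
    have -> : t * (d - c) = ((1 - t) * c + t * d) - c by ring.
    by rewrite -h2 subrr.
  have dc : d - c != 0 by rewrite subr_eq0 eq_sym.
  move: ht => /eqP; rewrite mulf_eq0 (negbTE dc) orbF => /eqP t0'.
  by rewrite h1 t0'; ring.
move=> ->; exists 0; split => //; split => //; split => /=; ring.
Qed.

Lemma prod_pos_ne (R : realFieldType) (A B t : R) :
  0 < A * B -> 0 <= t -> t <= 1 -> (1 - t) * A + t * B != 0.
Proof.
move=> hAB t0 t1; apply/eqP => h.
have [e|ne] := eqVneq t 1.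
  rewrite e in h; have hB : B = 0 by lra.
  by rewrite hB mulr0 ltxx in hAB.
have t1' : 0 < 1 - t by rewrite subr_gt0 lt_neqAle ne t1.
have [hA|hA] := ltP 0 A.
  have hB : 0 < B by move: hAB; rewrite pmulr_rgt0.
  have u1 : 0 < (1 - t) * A by rewrite mulr_gt0.
  have u2 : 0 <= t * B by rewrite mulr_ge0 // ltW.
  lra.
have hA' : A < 0.
  rewrite lt_neqAle hA andbT; apply/eqP => e; by rewrite e mul0r ltxx in hAB.
have hB : B < 0 by move: hAB; rewrite nmulr_rgt0.
have u1 : (1 - t) * A < 0 by rewrite pmulr_rlt0.
have u2 : t * B <= 0 by rewrite mulr_ge0_le0 // ltW.
lra.
Qed.

Lemma pp_meet (R : realFieldType) (c d : R) (s1 s2 : segment R) :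
  c != d -> permc c d s1 -> permc c d s2 ->
  seg_meet s1 s2 <-> (sfoot c s1 - sfoot c s2) * (shead c s1 - shead c s2) <= 0.
Proof.
move=> cd p1 p2; split.
  move=> [z [/(perm_param cd p1) [t [t0 [t1 [h1 h2]]]]
             /(perm_param cd p2) [u [u0 [u1 [h3 h4]]]]]].
  have htu : (t - u) * (d - c) = 0.
    have : (1 - t) * c + t * d = (1 - u) * c + u * d by rewrite -h2 -h4.
    move=> e.
    have -> : (t - u) * (d - c) = ((1 - t) * c + t * d) - ((1 - u) * c + u * d) by ring.
    by rewrite e subrr.
  have dc : d - c != 0 by rewrite subr_eq0 eq_sym.
  move: htu => /eqP; rewrite mulf_eq0 (negbTE dc) orbF subr_eq0 => /eqP tu.
  rewrite tu in h1.
  have hz : (1 - u) * (sfoot c s1 - sfoot c s2) + u * (shead c s1 - shead c s2) = 0.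
    have -> : (1 - u) * (sfoot c s1 - sfoot c s2) + u * (shead c s1 - shead c s2) =
      ((1 - u) * sfoot c s1 + u * shead c s1) - ((1 - u) * sfoot c s2 + u * shead c s2) by ring.
    by rewrite -h1 -h3 subrr.
  rewrite leNgt; apply/negP => hp.
  by move: (prod_pos_ne hp u0 u1); rewrite hz eqxx.
set A := sfoot c s1 - sfoot c s2; set B := shead c s1 - shead c s2 => hAB.
have [t [t0 [t1 ht]]] : exists t, 0 <= t /\ t <= 1 /\ (1 - t) * A + t * B = 0.
  have [e|ne] := eqVneq A B.
    rewrite -e in hAB; have hA : A = 0.
      by apply/eqP; rewrite -sqrf_eq0 eq_le hAB sqr_ge0.
    by exists 0; split => //; split => //; rewrite -e hA; ring.
  have hne : A - B != 0 by rewrite subr_eq0.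
  exists (A / (A - B)).
  have [hp|hn] := ltP 0 (A - B).
    have hA : 0 <= A by rewrite leNgt; apply/negP => hA; nra.
    have hB : B <= 0 by rewrite leNgt; apply/negP => hB; nra.
    split; first by rewrite divr_ge0 // ltW.
    split; first by rewrite ler_pdivrMr // mul1r; lra.
    by field.
  have hn' : A - B < 0 by rewrite lt_neqAle hne.
  have hA : A <= 0 by rewrite leNgt; apply/negP => hA; nra.
  have hB : 0 <= B by rewrite leNgt; apply/negP => hB; nra.
  split; first by rewrite ler_ndivlMr // mul0r.
  split; first by rewrite ler_ndivrMr // mul1r; lra.
  by field.
exists ((1 - t) * sfoot c s1 + t * shead c s1, (1 - t) * c + t * d); split.
  by apply/(perm_param cd p1); exists t.
apply/(perm_param cd p2); exists t; split => //; split => //; split => //=.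
have e : (1 - t) * sfoot c s1 + t * shead c s1 - ((1 - t) * sfoot c s2 + t * shead c s2) = 0.
  by rewrite -ht /A /B; ring.
by apply/eqP; rewrite -subr_eq0 e.
Qed.

Lemma int_on_c (R : realFieldType) (c : R) (s : segment R) {z : point R} :
  s.1.2 = c -> s.2.2 = c -> on_seg z s -> z.2 = c.
Proof. by move=> e1 e2 [t [_ [_ [_ ->]]]]; rewrite e1 e2; ring. Qed.

Lemma ip_meet (R : realFieldType) (c d : R) (s1 s2 : segment R) :
  c != d -> s1.1.2 = c -> s1.2.2 = c -> permc c d s2 ->
  seg_meet s1 s2 <-> on_seg (sfoot c s2, c) s1.
Proof.
move=> cd e1 e2 p2; split.
  move=> [[x y] [h1 h2]].
  have ey : y = c by apply: (int_on_c e1 e2 h1).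
  rewrite ey in h1 h2.
  by move: h2 => /(perm_on_c cd p2) <-.
move=> h; exists (sfoot c s2, c); split => //.
by apply/(perm_on_c cd p2).
Qed.

Lemma ii_meet (R : realFieldType) (c : R) (s1 s2 : segment R) :
  s1.1.2 = c -> s1.2.2 = c -> s2.1.2 = c -> s2.2.2 = c ->
  seg_meet s1 s2 <-> exists x, on_seg (x, c) s1 /\ on_seg (x, c) s2.
Proof.
move=> e1 e2 e3 e4; split.
  move=> [[x y] [h1 h2]]; exists x.
  have ey : y = c := int_on_c e1 e2 h1.
  by rewrite -ey.
by move=> [x [h1 h2]]; exists (x, c).
Qed.

Lemma btw_split (R : realFieldType) (p q y x : R) : btw p q x -> btw p y x \/ btw y q x.
Proof. rewrite /btw => H. lra. Qed.

Record setting (R : realFieldType) (n : nat) (K : nat -> bool) (inI : nat -> R -> Prop)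
  (f g : nat -> R) (meet : nat -> nat -> Prop) : Prop := Setting {
 s_conv : forall t x y z, (t < n)%N -> K t -> inI t x -> inI t y -> btw x y z -> inI t z;
 s_II : forall u v, (u < n)%N -> (v < n)%N -> K u -> K v -> meet u v ->
   exists x, inI u x /\ inI v x;
 s_II' : forall u v x, (u < n)%N -> (v < n)%N -> K u -> K v -> inI u x -> inI v x -> meet u v;
 s_IP : forall u v, (u < n)%N -> (v < n)%N -> K u -> ~~ K v -> meet u v <-> inI u (f v);
 s_PP : forall u v, (u < n)%N -> (v < n)%N -> ~~ K u -> ~~ K v ->
   meet u v <-> (f u - f v) * (g u - g v) <= 0;
 s_sym : forall u v, meet u v -> meet v u;
 s_cons : forall u, (u.+1 < n)%N -> meet u u.+1;
 s_wrap : meet n.-1 0;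
 s_adj : forall u v, (u < n)%N -> (v < n)%N -> u != v -> meet u v ->
    u.+1 = v \/ v.+1 = u \/ (u = 0%N /\ v = n.-1) \/ (v = 0%N /\ u = n.-1)
}.

Section Abs.
End Abs.

Lemma chainS (R : realFieldType) n K (inI : nat -> R -> Prop) f g meet
  (S : setting n K inI f g meet) (k u : nat) (p q x : R) :
  (u + k < n)%N -> (forall t, (u <= t <= u + k)%N -> K t) ->
  inI u p -> inI (u + k)%N q -> btw p q x -> exists t, (u <= t <= u + k)%N /\ inI t x.
Proof.
elim: k u p => [|k IH] u p hn hK hp hq hx.
  exists u; split; first by rewrite addn0 leqnn.
  rewrite addn0 in hn.
  have hKu : K u by apply: hK; rewrite addn0 leqnn.
  move: hq; rewrite addn0 => hq.
  exact: (s_conv S hn hKu hp hq hx).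
have hu : (u.+1 < n)%N by lia.
have [y [hy1 hy2]] := s_II S (ltnW hu) hu (hK u ltac:(lia)) (hK u.+1 ltac:(lia)) (s_cons S hu).
case: (btw_split y hx) => h.
  exists u; split; first lia.
  exact: (s_conv S (ltnW hu) (hK u ltac:(lia)) hp hy1 h).
have [t [ht1 ht2]] := IH u.+1 y ltac:(lia) (fun t ht => hK t ltac:(lia)) hy2
  ltac:(by rewrite addSnnS) h.
by exists t; split => //; lia.
Qed.

Lemma argmax (R : realFieldType) (F : nat -> R) (lo k : nat) :
  exists m, (lo <= m <= lo + k)%N /\ forall q, (lo <= q <= lo + k)%N -> F q <= F m.
Proof.
elim: k => [|k [m [hm1 hm2]]].
  exists lo; split; first lia.
  by move=> q hq; have -> : q = lo by lia.
have [h|h] := lerP (F (lo + k.+1)%N) (F m).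
  exists m; split; first lia.
  move=> q hq; have [e|hq'] : q = (lo + k.+1)%N \/ (lo <= q <= lo + k)%N by lia.
    by rewrite e.
  exact: hm2.
exists (lo + k.+1)%N; split; first lia.
move=> q hq; have [e|hq'] : q = (lo + k.+1)%N \/ (lo <= q <= lo + k)%N by lia.
  by rewrite e.
exact: le_trans (hm2 q hq') (ltW h).
Qed.

Lemma sign_prod (R : realFieldType) (a b : R) : 0 < a * b -> (a < 0 /\ b < 0) \/ (0 < a /\ 0 < b).
Proof.
move=> h; have [ha|ha] := ltP 0 a.
  by right; split => //; move: h; rewrite pmulr_rgt0.
have ha' : a < 0.
  rewrite lt_neqAle ha andbT; apply/eqP => e; by rewrite e mul0r ltxx in h.
by left; split => //; move: h; rewrite nmulr_rgt0.
Qed.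

Lemma side (R : realFieldType) (F G : nat -> R) (y1 y2 : R) (lo k : nat) :
  (forall q, (lo <= q < lo + k)%N -> (F q - F q.+1) * (G q - G q.+1) <= 0) ->
  (forall q, (lo <= q <= lo + k)%N -> 0 < (F q - y1) * (G q - y2)) ->
  (forall q, (lo <= q <= lo + k)%N -> F q < y1 /\ G q < y2) \/
  (forall q, (lo <= q <= lo + k)%N -> y1 < F q /\ y2 < G q).
Proof.
move=> hc; elim: k hc => [|k IH] hc hp.
  have := hp lo ltac:(lia); case/sign_prod => [[h1 h2]|[h1 h2]].
    left => q hq; have -> : q = lo by lia.
    split; lra.
  right => q hq; have -> : q = lo by lia.
  split; lra.
have IH' := IH (fun q hq => hc q ltac:(lia)) (fun q hq => hp q ltac:(lia)).
have hl := hc (lo + k)%N ltac:(lia).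
rewrite -addnS in hl.
case/sign_prod: (hp (lo + k.+1)%N ltac:(lia)) => [[h1 h2]|[h1 h2]]; case: IH' => IH'.
- left => q hq; have [e|hq'] : q = (lo + k.+1)%N \/ (lo <= q <= lo + k)%N by lia.
    by rewrite e; split; lra.
  exact: IH'.
- have [a1 a2] := IH' (lo + k)%N ltac:(lia).
  have : 0 < (F (lo + k)%N - F (lo + k.+1)%N) * (G (lo + k)%N - G (lo + k.+1)%N).
    by rewrite mulr_gt0 // subr_gt0; lra.
  by rewrite ltNge hl.
- have [a1 a2] := IH' (lo + k)%N ltac:(lia).
  have : 0 < (F (lo + k)%N - F (lo + k.+1)%N) * (G (lo + k)%N - G (lo + k.+1)%N).
    by rewrite nmulr_rgt0 // subr_lt0; lra.
  by rewrite ltNge hl.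
- right => q hq; have [e|hq'] : q = (lo + k.+1)%N \/ (lo <= q <= lo + k)%N by lia.
    by rewrite e; split; lra.
  exact: IH'.
Qed.

Lemma noadj (R : realFieldType) n K (inI : nat -> R -> Prop) f g meet
  (S : setting n K inI f g meet) u v :
  (u < n)%N -> (v < n)%N -> u != v ->
  ~ (u.+1 = v \/ v.+1 = u \/ (u = 0%N /\ v = n.-1) \/ (v = 0%N /\ u = n.-1)) -> ~ meet u v.
Proof. move=> hu hv ne H hm; exact: H (s_adj S hu hv ne hm). Qed.

Lemma coreR (R : realFieldType) n K (inI : nat -> R -> Prop) f g meet
  (S : setting n K inI f g meet) (e1 p2 e2 : nat) :
  (0 < e1)%N -> (e1 < p2)%N -> (p2 < e2)%N -> (e2 < n)%N ->
  (forall t, (t < e1)%N -> K t) -> (forall t, (e1 <= t < p2)%N -> ~~ K t) ->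
  (forall t, (p2 <= t < e2)%N -> K t) -> ~~ K e2 -> ~~ K n.-1 ->
  (forall q, (e1 <= q < p2)%N -> f q < f e2 /\ g q < g e2) -> False.
Proof.
move=> h0 h1 h2 h3 KA KC KB Ke2 Kn sd.
have [qs [hqs hmax]] := argmax f e1 (p2.-1 - e1).
have hqs' : (e1 <= qs < p2)%N by lia.
have hmax' : forall q, (e1 <= q < p2)%N -> f q <= f qs.
  by move=> q hq; apply: hmax; lia.
have Kqs : ~~ K qs := KC qs hqs'.
have hqn : (qs < n)%N by lia.
have nm : forall t, (e2 <= t < n)%N -> ~ meet t qs.
  move=> t ht; apply: (noadj S); try lia.
pose Rt t := if K t then forall x, inI t x -> f qs < x else f qs < f t /\ g qs < g t.
have hR : forall k, (e2 + k < n)%N -> Rt (e2 + k)%N.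
  elim=> [|k IH] hk.
    by rewrite addn0 /Rt (negbTE Ke2); exact: sd qs hqs'.
  have IH' := IH ltac:(lia).
  set t := (e2 + k)%N in IH' *.
  have -> : (e2 + k.+1)%N = t.+1 by rewrite /t addnS.
  have ht1 : (t.+1 < n)%N by rewrite /t; lia.
  have hm := s_cons S ht1.
  have nmt := nm t.+1 ltac:(rewrite /t; lia).
  move: IH'; rewrite /Rt.
  case Kt: (K t); case Kt1: (K t.+1) => IH'.
  - have [x [hx1 hx2]] := s_II S (ltnW ht1) ht1 Kt Kt1 hm.
    have hx := IH' x hx1.
    move=> y hy; rewrite ltNge; apply/negP => hyM.
    have hb : btw x y (f qs) by rewrite /btw; lra.
    have hM : inI t.+1 (f qs) := s_conv S ht1 Kt1 hx2 hy hb.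
    by apply: nmt; apply/(s_IP S ht1 hqn Kt1 Kqs).
  - have hf : inI t (f t.+1) by apply/(s_IP S (ltnW ht1) ht1 Kt (negbT Kt1)).
    have hf' := IH' _ hf.
    have hp : 0 < (f t.+1 - f qs) * (g t.+1 - g qs).
      rewrite ltNge; apply/negP => h; apply: nmt.
      by apply/(s_PP S ht1 hqn (negbT Kt1) Kqs).
    case/sign_prod: hp => [[a b]|[a b]]; split; lra.
  - have hf : inI t.+1 (f t).
      by apply/(s_IP S ht1 (ltnW ht1) Kt1 (negbT Kt)); exact: (s_sym S hm).
    move=> y hy; rewrite ltNge; apply/negP => hyM.
    case: IH' => [i1 i2].
    have hb : btw (f t) y (f qs) by rewrite /btw; lra.
    have hM : inI t.+1 (f qs) := s_conv S ht1 Kt1 hf hy hb.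
    by apply: nmt; apply/(s_IP S ht1 hqn Kt1 Kqs).
  - case: IH' => [i1 i2].
    have hc : (f t - f t.+1) * (g t - g t.+1) <= 0.
      by apply/(s_PP S (ltnW ht1) ht1 (negbT Kt) (negbT Kt1)).
    have hp : 0 < (f t.+1 - f qs) * (g t.+1 - g qs).
      rewrite ltNge; apply/negP => h; apply: nmt.
      by apply/(s_PP S ht1 hqn (negbT Kt1) Kqs).
    case/sign_prod: hp => [[a b]|[a b]]; last by split; lra.
    have : 0 < (f t - f t.+1) * (g t - g t.+1) by rewrite mulr_gt0 // subr_gt0; lra.
    by rewrite ltNge hc.
have : Rt n.-1.
  have := hR (n.-1 - e2)%N ltac:(lia).
  by have -> : (e2 + (n.-1 - e2))%N = n.-1 by lia.
rewrite /Rt (negbTE Kn) => [[hfn _]].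
have : Rt e2 by have := hR 0%N ltac:(lia); rewrite addn0.
rewrite /Rt (negbTE Ke2) => [[hfe2 _]].
have hn0 : (0 < n)%N by lia.
have hnn : (n.-1 < n)%N by lia.
have iA0 : inI 0 (f n.-1).
  by apply/(s_IP S hn0 hnn (KA 0%N h0) Kn); exact: (s_sym S (s_wrap S)).
have iA1 : inI e1.-1 (f e1).
  have hc : ((e1.-1).+1 < n)%N by lia.
  have := s_cons S hc; rewrite prednK // => hm.
  by apply/(s_IP S (ltnW hc) _ (KA _ _) (KC e1 _)) => //; lia.
have hbA : btw (f n.-1) (f e1) (f qs).
  have := hmax' e1 ltac:(lia); rewrite /btw => ?; lra.
have [u0 [hu0 iu0]] := chainS S (k := e1.-1) (u := 0%N) ltac:(lia)
    (fun t ht => KA t ltac:(lia)) iA0 iA1 hbA.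
have iB0 : inI p2 (f p2.-1).
  have hc : ((p2.-1).+1 < n)%N by lia.
  have := s_cons S hc; rewrite prednK //; last by lia.
  move=> hm; apply/(s_IP S _ _ (KB p2 _) (KC p2.-1 _)) => //; try lia.
  exact: (s_sym S hm).
have iB1 : inI (p2 + (e2.-1 - p2))%N (f e2).
  have -> : (p2 + (e2.-1 - p2))%N = e2.-1 by lia.
  have hc : ((e2.-1).+1 < n)%N by lia.
  have := s_cons S hc; rewrite prednK //; last by lia.
  by move=> hm; apply/(s_IP S (ltnW hc) h3 (KB _ _) Ke2) => //; lia.
have hbB : btw (f p2.-1) (f e2) (f qs).
  have := hmax' p2.-1 ltac:(lia); rewrite /btw => ?; lra.
have [v0 [hv0 iv0]] := chainS S (k := (e2.-1 - p2)%N) (u := p2) ltac:(lia)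
    (fun t ht => KB t ltac:(lia)) iB0 iB1 hbB.
have hm : meet u0 v0.
  by apply: (s_II' S _ _ (KA u0 _) (KB v0 _) iu0 iv0); lia.
apply: (noadj S _ _ _ _ hm); try lia.
Qed.

Lemma setting_neg (R : realFieldType) n K (inI : nat -> R -> Prop) f g meet
  (S : setting n K inI f g meet) :
  setting n K (fun t x => inI t (- x)) (fun t => - f t) (fun t => - g t) meet.
Proof.
case: S => conv II II' IP PP sym cons wrap adj; split => //.
- move=> t x y z ht Kt hx hy hb; apply: (conv _ (- x) (- y) (- z)) => //.
  by rewrite /btw in hb *; lra.
- move=> u v hu hv Ku Kv hm; have [x [h1 h2]] := II u v hu hv Ku Kv hm.
  by exists (- x); rewrite opprK.
- by move=> u v x hu hv Ku Kv h1 h2; apply: (II' u v (- x)).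
- by move=> u v hu hv Ku Kv; rewrite opprK; exact: IP.
- move=> u v hu hv Ku Kv.
  have -> : (- f u - - f v) * (- g u - - g v) = (f u - f v) * (g u - g v) by ring.
  exact: PP.
Qed.

Lemma core (R : realFieldType) n K (inI : nat -> R -> Prop) f g meet
  (S : setting n K inI f g meet) (e1 p2 e2 : nat) :
  (0 < e1)%N -> (e1 < p2)%N -> (p2 < e2)%N -> (e2 < n)%N ->
  (forall t, (t < e1)%N -> K t) -> (forall t, (e1 <= t < p2)%N -> ~~ K t) ->
  (forall t, (p2 <= t < e2)%N -> K t) -> ~~ K e2 -> ~~ K n.-1 -> False.
Proof.
move=> h0 h1 h2 h3 KA KC KB Ke2 Kn.
have nmq : forall q, (e1 <= q <= e1 + (p2.-1 - e1))%N -> 0 < (f q - f e2) * (g q - g e2).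
  move=> q hq; rewrite ltNge; apply/negP => h.
  have hq' : (q < n)%N by lia.
  apply: (noadj S (u := q) (v := e2) hq' h3); try lia.
  by apply/(s_PP S hq' h3 (KC q _) Ke2) => //; lia.
have hc : forall q, (e1 <= q < e1 + (p2.-1 - e1))%N ->
    (f q - f q.+1) * (g q - g q.+1) <= 0.
  move=> q hq; have hq' : (q.+1 < n)%N by lia.
  apply/(s_PP S (ltnW hq') hq' (KC q ltac:(lia)) (KC q.+1 ltac:(lia))).
  exact: (s_cons S hq').
case: (side hc nmq) => hs.
- apply: (coreR S h0 h1 h2 h3 KA KC KB Ke2 Kn) => q hq; apply: hs; lia.
- apply: (coreR (setting_neg S) h0 h1 h2 h3 KA KC KB Ke2 Kn) => q hq.
  by have := hs q ltac:(lia); move=> [? ?]; split; lra.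
Qed.

Lemma noperm (R : realFieldType) n K (inI : nat -> R -> Prop) f g meet
  (S : setting n K inI f g meet) :
  (4 <= n)%N -> (forall t, (t < n)%N -> K t) -> False.
Proof.
move=> h4 KK.
have hK : forall t, (t < n)%N -> K t := KK.
have [x0 [a0 a1]] := s_II S (u := 0%N) (v := 1%N) ltac:(lia) ltac:(lia)
   (KK 0%N ltac:(lia)) (KK 1%N ltac:(lia)) (s_cons S (u := 0%N) ltac:(lia)).
have [x2 [b1 b2]] := s_II S (u := 1%N) (v := 2%N) ltac:(lia) ltac:(lia)
   (KK 1%N ltac:(lia)) (KK 2%N ltac:(lia)) (s_cons S (u := 1%N) ltac:(lia)).
have [z [c2 c3]] := s_II S (u := 2%N) (v := 3%N) ltac:(lia) ltac:(lia)
   (KK 2%N ltac:(lia)) (KK 3%N ltac:(lia)) (s_cons S (u := 2%N) ltac:(lia)).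
have [y [dn d0]] := s_II S (u := n.-1) (v := 0%N) ltac:(lia) ltac:(lia)
   (KK n.-1 ltac:(lia)) (KK 0%N ltac:(lia)) (s_wrap S).
have nm02 : ~ meet 0%N 2%N by apply: (noadj S); lia.
have nm02' : forall w, inI 0%N w -> inI 2%N w -> False.
  move=> w h0 h2; apply: nm02.
  exact: (s_II' S (u := 0%N) (v := 2%N) (x := w) ltac:(lia) ltac:(lia) (KK 0%N ltac:(lia)) (KK 2%N ltac:(lia)) h0 h2).
have e1 : ~ btw x0 y x2.
  move=> hb; apply: (nm02' x2) => //.
  exact: (s_conv S (t := 0%N) ltac:(lia) (KK 0%N ltac:(lia)) a0 d0 hb).
have e2 : ~ btw z x2 x0.
  move=> hb; apply: (nm02' x0) => //.
  exact: (s_conv S (t := 2%N) ltac:(lia) (KK 2%N ltac:(lia)) c2 b2 hb).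
have e3 : x0 < x2 \/ x2 < x0.
  have [h|h|e] := ltgtP x0 x2; [by left|by right|].
  by exfalso; apply: (nm02' x0) => //; rewrite e.
have : btw x0 x2 y \/ btw z y x0 by rewrite /btw in e1 e2 *; lra.
case => hb.
  have hy : inI 1%N y := s_conv S (t := 1%N) ltac:(lia) (KK 1%N ltac:(lia)) a1 b1 hb.
  apply: (noadj S (u := 1%N) (v := n.-1)); try lia.
  exact: (s_II' S (u := 1%N) (v := n.-1) (x := y) ltac:(lia) ltac:(lia) (KK 1%N ltac:(lia)) (KK n.-1 ltac:(lia)) hy dn).
have dn' : inI (3 + (n.-1 - 3))%N y by have -> : (3 + (n.-1 - 3))%N = n.-1 by lia.
have [t [ht it]] := chainS S (k := (n.-1 - 3)%N) (u := 3%N) ltac:(lia)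
    (fun t ht => KK t ltac:(lia)) c3 dn' hb.
apply: (noadj S (u := 1%N) (v := t)); try lia.
exact: (s_II' S (u := 1%N) (v := t) (x := x0) ltac:(lia) ltac:(lia) (KK 1%N ltac:(lia)) (KK t ltac:(lia)) a1 it).
Qed.

Lemma mk_setting (R : realFieldType) (a b c d : R) n (s : nat -> segment R) (r : nat) :
  c != d -> (1 < n)%N ->
  (forall i, (i < n)%N -> ~~ interval_seg a b (s i) -> permc c d (s i)) ->
  (forall i, (i < n)%N -> interval_seg a b (s i) -> (s i).1.2 = c /\ (s i).2.2 = c) ->
  represents_cycle n s ->
  setting n (fun t => interval_seg a b (s ((r + t) %% n)%N))
     (fun t x => on_seg (x, c) (s ((r + t) %% n)%N))
     (fun t => sfoot c (s ((r + t) %% n)%N)) (fun t => shead c (s ((r + t) %% n)%N))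
     (fun u v => seg_meet (s ((r + u) %% n)%N) (s ((r + v) %% n)%N)).
Proof.
move=> hcd n1 hperm hint hrep.
have n0 : (0 < n)%N by lia.
have hx : forall t, ((r + t) %% n < n)%N by move=> t; rewrite ltn_pmod.
split.
- move=> t x y z ht Kt; have [e1 e2] := hint _ (hx t) Kt.
  rewrite !(on_seg_int _ e1 e2) /btw => h1 h2 h3; lra.
- move=> u v hu hv Ku Kv.
  have [e1 e2] := hint _ (hx u) Ku; have [e3 e4] := hint _ (hx v) Kv.
  by move/(ii_meet e1 e2 e3 e4).
- move=> u v x hu hv Ku Kv h1 h2.
  have [e1 e2] := hint _ (hx u) Ku; have [e3 e4] := hint _ (hx v) Kv.
  by apply/(ii_meet e1 e2 e3 e4); exists x.
- move=> u v hu hv Ku Kv.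
  have [e1 e2] := hint _ (hx u) Ku.
  exact: ip_meet hcd e1 e2 (hperm _ (hx v) Kv).
- move=> u v hu hv Ku Kv.
  exact: pp_meet hcd (hperm _ (hx u) Ku) (hperm _ (hx v) Kv).
- by move=> u v [z [h1 h2]]; exists z.
- move=> u hu; apply/(hrep _ _ (hx u) (hx u.+1)).
    by rewrite rot_eq ?(ltnW hu) // neq_ltn ltnSn.
  exact: adj_rot_cons.
- apply/(hrep _ _ (hx n.-1) (hx 0%N)).
    by rewrite rot_eq //; lia.
  exact: adj_rot_wrap.
- move=> u v hu hv ne hm; apply: (adj_rot (r := r)) => //.
  by apply/(hrep _ _ (hx u) (hx v)) => //; rewrite rot_eq.
Qed.

Theorem mainTheorem5 (R : realFieldType) (a b : R) (n : nat)
    (s : nat -> segment R) :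
  (4 <= n)%N ->
  IPSEGstar_model a b n s ->
  represents_cycle n s ->
  (exists i, (i < n)%N /\ interval_seg a b (s i)) ->
  (exists i k, interval_arc a b n s i k /\
     forall i' k', interval_arc a b n s i' k' -> i' = i /\ k' = k) /\
  (exists i k, perm_arc a b n s i k /\
     forall i' k', perm_arc a b n s i' k' -> i' = i /\ k' = k).
Proof.
move=> h4 [[ab hseg] [c [hc hint]]] hrep [i1 [hi1 Pi1]].
pose d := if c == a then b else a.
have hcd : c != d.
  rewrite /d; have [ca|ca] := eqVneq c a.
    by rewrite ca.
  by [].
have hint' : forall i, (i < n)%N -> interval_seg a b (s i) -> (s i).1.2 = c /\ (s i).2.2 = c.
  by move=> i hi /(hint i hi) /andP [/eqP -> /eqP ->].
have hperm : forall i, (i < n)%N -> ~~ interval_seg a b (s i) -> permc c d (s i).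
  move=> i hi hI; have := hseg i hi; rewrite (negbTE hI) /= /perm_seg /on_line /permc /d.
  have [ca|ca] := eqVneq c a.
    by rewrite ca; case/orP => /andP [/eqP -> /eqP ->]; [left|right].
  move: hc; rewrite (negbTE ca) /= => /eqP cb; rewrite cb.
  by case/orP => /andP [/eqP -> /eqP ->]; [right|left].
have n1 : (1 < n)%N by lia.
have n0 : (0 < n)%N by lia.
pose P j := interval_seg a b (s (j %% n)%N).
have excl : forall x, (x < n)%N -> perm_seg a b (s x) = ~~ interval_seg a b (s x).
  move=> x hx; have := hseg x hx.
  rewrite /interval_seg /perm_seg /on_line.
  case: (s x) => [[x1 y1] [x2 y2]] /=.
  have ba : b != a by rewrite eq_sym.
  by case: (eqVneq y1 a) => [->|_]; case: (eqVneq y2 a) => [->|_];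
     case: (eqVneq y1 b) => [e|_]; case: (eqVneq y2 b) => [e'|_];
     rewrite ?eqxx ?(negbTE ab) ?(negbTE ba) //= ?e ?e' ?eqxx ?(negbTE ab) ?(negbTE ba).
have Pn : forall j, P (j %% n)%N = P j by move=> j; rewrite /P modn_mod.
have pe : forall j, perm_seg a b (s (j %% n)%N) = ~~ P j.
  by move=> j; rewrite excl // ltn_pmod.
have Pma : forall x y, P (x %% n + y)%N = P (x + y)%N by move=> x y; rewrite -Pn modnDml Pn.
have Pan : forall j, P (j + n)%N = P j by move=> j; rewrite -Pn modnDr Pn.
have S := fun r => mk_setting r hcd n1 hperm hint' hrep.
have exP : exists j, ~~ P j.
  have [j Pj|allP] := pickP (fun j : 'I_n => ~~ P j); first by exists j.
  exfalso; apply: (noperm (S 0%N) h4) => t ht.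
  have := allP (Ordinal ht); rewrite /= add0n => /negbFE.
  by rewrite /P.
have H3 : forall i i', (i < n)%N -> (i' < n)%N -> P i -> ~~ P (i + n - 1)%N ->
    P i' -> ~~ P (i' + n - 1)%N -> i = i'.
  move=> i i' hi hi' Qi Qi1 Qi' Qi'1.
  case: (eqVneq i i') => // ne; exfalso.
  have [p' [hp' ep']] : exists p', (0 < p' < n)%N /\ ((i + p') %% n = i')%N.
    exists ((i' + n - i) %% n)%N.
    have e : ((i + (i' + n - i) %% n) %% n = i')%N.
      rewrite modnDmr; have -> : (i + (i' + n - i) = i' + n)%N by move: hi; clear; lia.
      by rewrite modnDr modn_small.
    split => //; rewrite ltn_pmod // andbT lt0n; apply/eqP => e0.
    by rewrite e0 addn0 modn_small // in e; rewrite e eqxx in ne.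
  have K0 : P (i + 0)%N by rewrite addn0.
  have Kn : ~~ P (i + n.-1)%N.
    by have -> : (i + n.-1 = i + n - 1)%N by move: n0; clear; lia.
  have Kp : P (i + p')%N by rewrite -Pn ep'.
  have Kp1 : ~~ P (i + p'.-1)%N.
    have : ~~ P ((i + p') %% n + (n - 1))%N.
      by rewrite ep'; have -> : (i' + (n - 1) = i' + n - 1)%N by move: n0; clear; lia.
    rewrite Pma; have -> : (i + p' + (n - 1) = i + p'.-1 + n)%N by move: hp'; clear; lia.
    by rewrite Pan.
  have [e1 [he1 [Ke1 KA]]] : exists e1, (0 < e1 <= p'.-1)%N /\ ~~ P (i + e1)%N /\
      forall t, (t < e1)%N -> P (i + t)%N.
    have := @first_min (fun t => ~~ P (i + t)%N) 0 p'.-1; rewrite /= !negbK add0n.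
    move=> /(_ K0 Kp1) [e [he [Pe Pmin]]].
    exists e; split => //; split; first by rewrite add0n in Pe.
    by move=> t ht; have := Pmin t ht; rewrite add0n negbK.
  have [e [he [Pe Pmin]]] := @first_min (fun t => P (i + t)%N) e1 (p' - e1) Ke1
    ltac:(by have -> : (e1 + (p' - e1) = p')%N by move: he1 hp'; clear; lia).
  set p2 := (e1 + e)%N in Pe.
  have hp2 : (p2 <= p')%N by rewrite /p2; move: he he1 hp'; clear; lia.
  have Kn' : ~~ P (i + (p2 + (n.-1 - p2)))%N.
    by have -> : (p2 + (n.-1 - p2) = n.-1)%N by move: hp2 hp'; clear; lia.
  have Pe' : ~~ ~~ P (i + p2)%N by rewrite negbK.
  have [f [hf [Pf Pfmin]]] := @first_min (fun t => ~~ P (i + t)%N) p2 (n.-1 - p2) Pe' Kn'.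
  rewrite /= in Pf Pfmin.
  apply: (core (S i) (e1 := e1) (p2 := p2) (e2 := (p2 + f)%N)).
  - by move: he1; clear; lia.
  - by rewrite /p2; move: he; clear; lia.
  - by move: hf; clear; lia.
  - by move: hf hp2 hp'; clear; lia.
  - by move=> t ht; apply: KA.
  - move=> t ht; have := Pmin (t - e1)%N ltac:(move: ht; rewrite /p2; clear; lia).
    by have -> : (e1 + (t - e1) = t)%N by move: ht; clear; lia.
  - move=> t ht; have := Pfmin (t - p2)%N ltac:(move: ht; clear; lia).
    by rewrite negbK; have -> : (p2 + (t - p2) = t)%N by move: ht; clear; lia.
  - exact: Pf.
  - exact: Kn.
have hP1 : exists j, P j by exists i1; rewrite /P modn_small.
have [[i [k [A1 A2]]] [j [l [B1 B2]]]] := comb n0 Pn hP1 exP H3.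
have arcE : forall i k, perm_arc a b n s i k <-> arcP (fun j => ~~ P j) n i k.
  move=> i0 k0; rewrite /perm_arc /arc /arcP; split.
    move=> [q1 [q2 [q3 [q4 [q5 q6]]]]]; do 3 (split => //); split.
      by move=> m hm; have := q4 m hm; rewrite pe.
    by split; [move: q5 | move: q6]; rewrite pe.
  move=> [q1 [q2 [q3 [q4 [q5 q6]]]]]; do 3 (split => //); split.
    by move=> m hm; rewrite pe; apply: q4.
  by split; rewrite pe.
split.
  exists i, k; split; first exact: A1.
  by move=> i' k' H; exact: A2 i' k' H.
exists j, l; split; first by apply/arcE.
by move=> i' k' /arcE H; exact: B2 i' k' H.
Qed.
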